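(* Let $c=\sqrt[3]{5589+891\sqrt{33}}/8=2.7551046130\ldots$ There is an absolute constant $C>0$ such that for every $n\ge1$ and every $A\subseteq\mathbb{F}_3^n$ for which the equation $a+b+c'=0$ with $a,b,c'\in A$ has no solutions except $a=b=c'$, one has $|A|\le C\,c^n$.
   Context: $\mathbb{F}_3$ is the field of integers modulo $3$. *)

(* Defs.v *)
From HB Require Import structures.
From mathcomp Require Import all_boot all_algebra.

Definition no_nontrivial_3sum (n : nat) (A : {set 'rV['F_3]_n}) : Prop :=
  forall a b c', a \in A -> b \in A -> c' \in A ->
    (a + b + c' = 0)%R -> a = b /\ b = c'.

Arguments no_nontrivial_3sum {n} A.

From Stdlib Require Import Reals.

Definition cconst : R :=
  (Rpower (5589 + 891 * sqrt 33) (1 / 3) / 8)%R.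

(* Main.v *)
Require Import Defs.
From HB Require Import structures.
From mathcomp Require Import all_boot all_algebra.
From Stdlib Require Import Reals.
From Stdlib Require Import Lra Lia.
From mathcomp Require all_order zify ring Rstruct.

Module Comb.
Import zify ring.
Set Implicit Arguments. Unset Strict Implicit. Unset Printing Implicit Defensive.
Import GRing.Theory.
Local Open Scope ring_scope.

Lemma sum_diag (F : fieldType) m (v : 'I_m -> F) (y z : 'I_m) :
  \sum_x v x * ((x == y) && (y == z))%:R = v y * (y == z)%:R.
Proof.
rewrite (bigD1 y) //= eqxx /= big1 ?addr0 // => x /negPf ->; by rewrite mulr0.
Qed.

Lemma core (F : fieldType) m r1 r2 r3 (f : 'M[F]_(r1,m))
  (F1 : 'I_r1 -> 'I_m -> 'I_m -> F) (g : 'M[F]_(r2,m))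
  (G : 'I_r2 -> 'I_m -> 'I_m -> F) (h : 'M[F]_(r3,m))
  (H : 'I_r3 -> 'I_m -> 'I_m -> F) :
  (forall x y z, ((x == y) && (y == z))%:R =
     \sum_i f i x * F1 i y z + \sum_j g j y * G j x z + \sum_k h k z * H k x y) ->
  (m <= r1 + r2 + r3)%nat.
Proof.
move=> Hid.
set K := kermx f^T.
set B := row_base K.
have rkB : \rank B = \rank K by rewrite eq_row_base.
have hd : (m - r1 <= \rank K)%nat.
  by rewrite /K mxrank_ker; have := rank_leq_col f^T; lia.
have fullB : row_full B^T by rewrite /row_full mxrank_tr rkB.
pose s := fullrankfun fullB.
have Us : (rowsub s B^T)^T \in unitmx by rewrite unitmx_tr; apply: fullrowsub_unit.
pose w : 'rV_(\rank K) := const_mx 1 *m invmx (rowsub s B^T)^T.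
pose v := w *m B.
have v1 (k : 'I_(\rank K)) : v 0 (s k) = 1.
  have := congr1 (fun M : 'rV[F]_(\rank K) => M 0 k) (mulmxKV Us (const_mx 1 : 'rV_(\rank K))).
  move=> E; have -> : (1:F) = (const_mx 1 : 'rV[F]_(\rank K)) 0 k by rewrite mxE.
  rewrite -E /v mxE [RHS]mxE; apply: eq_bigr => l _; by rewrite !mxE.
have vker : v *m f^T = 0.
  apply/sub_kermxP; apply: (submx_trans (submxMl w B)); by rewrite eq_row_base.
have kerf (i : 'I_r1) : \sum_x v 0 x * f i x = 0.
  have E := congr1 (fun M : 'rV[F]_r1 => M 0 i) vker; rewrite /= !mxE in E; rewrite -[RHS]E.
  by apply: eq_bigr => x _; rewrite !mxE.
have key y z : v 0 y * (y == z)%:R =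
   \sum_j g j y * (\sum_x v 0 x * G j x z) + \sum_k (\sum_x v 0 x * H k x y) * h k z.
  rewrite -(sum_diag (v 0)).
  under eq_bigr do rewrite Hid !mulrDr.
  rewrite !big_split /=.
  have -> : \sum_x v 0 x * (\sum_i f i x * F1 i y z) = 0.
    under eq_bigr do rewrite big_distrr /=.
    rewrite exchange_big /= big1 // => i _.
    under eq_bigr do rewrite mulrA.
    by rewrite -big_distrl /= kerf mul0r.
  rewrite add0r; congr (_ + _).
    under eq_bigr do rewrite big_distrr /=.
    rewrite exchange_big /=; apply: eq_bigr => j _.
    rewrite big_distrr /=; apply: eq_bigr => x _; ring.
  under eq_bigr do rewrite big_distrr /=.
  rewrite exchange_big /=; apply: eq_bigr => j _.
  rewrite big_distrl /=; apply: eq_bigr => x _; ring.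
pose P := \matrix_(k, j) g j (s k).
pose Q := \matrix_(j, l) (\sum_x v 0 x * G j x (s l)).
pose P' := \matrix_(k, j) (\sum_x v 0 x * H j x (s k)).
pose Q' := \matrix_(j, l) h j (s l).
have E : (1%:M : 'M_(\rank K)) = P *m Q + P' *m Q'.
  apply/matrixP => k l; rewrite !mxE.
  have -> : (k == l) = (s k == s l) by apply/eqP/eqP => [->|/fullrankfun_inj].
  transitivity (v 0 (s k) * (s k == s l)%:R); first by rewrite v1 mul1r.
  rewrite key; congr (_ + _); apply: eq_bigr => j _; by rewrite !mxE.
have : (\rank K <= r2 + r3)%nat.
  rewrite -{1}(mxrank1 F (\rank K)) E.
  apply: leq_trans (mxrank_add _ _) _; apply: leq_add.
    by apply: leq_trans (mxrankM_maxl _ _) (rank_leq_col _).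
  by apply: leq_trans (mxrankM_maxl _ _) (rank_leq_col _).
lia.
Qed.
Definition pp (t : 'I_7) : nat := nth 0%nat [:: 0;2;0;0;1;0;1]%nat t.
Definition qq (t : 'I_7) : nat := nth 0%nat [:: 0;0;2;0;1;1;0]%nat t.
Definition rr (t : 'I_7) : nat := nth 0%nat [:: 0;0;0;2;0;1;1]%nat t.
Definition kk (t : 'I_7) : 'F_3 := nth 0 [:: 1; -1; -1; -1; 1; 1; 1] t.

Lemma pqr_le t : (pp t + qq t + rr t <= 2)%nat.
Proof. by case: t => [[|[|[|[|[|[|[|?]]]]]]] ?]. Qed.

Lemma pp_lt t : (pp t < 3)%nat. Proof. by case: t => [[|[|[|[|[|[|[|?]]]]]]] ?]. Qed.
Lemma qq_lt t : (qq t < 3)%nat. Proof. by case: t => [[|[|[|[|[|[|[|?]]]]]]] ?]. Qed.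
Lemma rr_lt t : (rr t < 3)%nat. Proof. by case: t => [[|[|[|[|[|[|[|?]]]]]]] ?]. Qed.

Lemma f3_exp (a b c : 'F_3) :
  (a + b + c == 0)%:R = \sum_(t < 7) kk t * a ^+ pp t * b ^+ qq t * c ^+ rr t.
Proof.
rewrite !big_ord_recl big_ord0.
case: a => [[|[|[|//]]] ?]; case: b => [[|[|[|//]]] ?]; case: c => [[|[|[|//]]] ?]; apply/eqP; vm_compute; reflexivity.
Qed.


Lemma indic_row n (v : 'rV['F_3]_n) : (v == 0)%:R = \prod_i ((v 0 i == 0)%:R : 'F_3).
Proof.
have [->|ne] := eqVneq v 0.
  by rewrite big1 // => i _; rewrite mxE eqxx.
have [i Hi] : exists i, v 0 i != 0.
  apply/existsP; apply: contraR ne; rewrite negb_exists => /forallP H.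
  apply/eqP/rowP => i; rewrite mxE; exact/eqP/negbNE/H.
by rewrite (bigD1 i) //= (negPf Hi) mul0r.
Qed.

Lemma expand n (x y z : 'rV['F_3]_n) : ((x + y + z == 0)%:R : 'F_3) =
  \sum_(phi : {ffun 'I_n -> 'I_7}) (\prod_i kk (phi i)) * (\prod_i x 0 i ^+ pp (phi i))
     * (\prod_i y 0 i ^+ qq (phi i)) * (\prod_i z 0 i ^+ rr (phi i)).
Proof.
rewrite indic_row.
under eq_bigr do rewrite !mxE f3_exp.
by rewrite bigA_distr_bigA; apply: eq_bigr => phi _; rewrite -!big_split.
Qed.
Definition wt n (a : {ffun 'I_n -> 'I_3}) : nat := (\sum_i (a i : nat))%nat.
Definition Pn n : pred {ffun 'I_n -> 'I_3} := fun a => (3 * wt a <= 2 * n)%nat.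
Arguments Pn n : clear implicits.
Definition Xa n (x : 'rV['F_3]_n) (a : {ffun 'I_n -> 'I_3}) : 'F_3 := \prod_i x 0 i ^+ a i.
Definition proj (e : 'I_7 -> nat) (e_lt : forall t, (e t < 3)%nat) n (phi : {ffun 'I_n -> 'I_7})
  : {ffun 'I_n -> 'I_3} := [ffun i => Ordinal (e_lt (phi i))].

Lemma XaE e e_lt n (x : 'rV['F_3]_n) (phi : {ffun 'I_n -> 'I_7}) :
  \prod_i x 0 i ^+ e (phi i) = Xa x (@proj e e_lt n phi).
Proof. by apply: eq_bigr => i _; rewrite ffunE. Qed.

Lemma wtE e e_lt n (phi : {ffun 'I_n -> 'I_7}) : wt (@proj e e_lt n phi) = (\sum_i e (phi i))%nat.
Proof. by apply: eq_bigr => i _; rewrite ffunE. Qed.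

Lemma wt_tot n (phi : {ffun 'I_n -> 'I_7}) :
  (wt (proj pp_lt phi) + wt (proj qq_lt phi) + wt (proj rr_lt phi) <= 2 * n)%nat.
Proof.
rewrite !wtE -!big_split /=.
have -> : (2 * n = \sum_(i < n) 2)%nat by rewrite sum_nat_const card_ord mulnC.
by apply: leq_sum => i _; apply: pqr_le.
Qed.

Lemma group (Phi Af : finType) (C : pred Phi) (pi : Phi -> Af) (Q : pred Af)
   (u : Af -> 'F_3) (w : Phi -> 'F_3) :
  (forall phi, C phi -> Q (pi phi)) ->
  \sum_(phi | C phi) u (pi phi) * w phi =
  \sum_(i < #|Q|) u (enum_val i) * \sum_(phi | C phi && (pi phi == enum_val i)) w phi.
Proof.
move=> HQ; rewrite (partition_big pi Q) //.
rewrite (big_enum_val (A := Q)) /=; apply: eq_bigr => i _.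
by rewrite big_distrr /=; apply: eq_bigr => phi /andP[_ /eqP ->].
Qed.

Lemma triple n (a : 'rV['F_3]_n) : a + a + a = 0.
Proof.
apply/rowP => i; rewrite !mxE; case: (a 0 i) => [[|[|[|//]]] ?]; apply/eqP; vm_compute; reflexivity.
Qed.

Lemma capbound n (A : {set 'rV['F_3]_n}) : no_nontrivial_3sum A -> (#|A| <= 3 * #|Pn n|)%nat.
Proof.
move=> HA.
pose e : 'I_#|A| -> 'rV['F_3]_n := enum_val.
have eA x : e x \in A := enum_valP x.
have einj : injective e := enum_val_inj.
pose a_ : 'I_#|Pn n| -> {ffun 'I_n -> 'I_3} := enum_val.
pose K (phi : {ffun 'I_n -> 'I_7}) := \prod_i kk (phi i).
pose pP := proj pp_lt (n:=n). pose pQ := proj qq_lt (n:=n). pose pR := proj rr_lt (n:=n).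
pose C1 phi := Pn n (pP phi).
pose C2 phi := ~~ Pn n (pP phi) && Pn n (pQ phi).
pose C3 phi := ~~ Pn n (pP phi) && ~~ Pn n (pQ phi).
suff : (#|A| <= #|Pn n| + #|Pn n| + #|Pn n|)%nat by lia.
apply: (core (f := \matrix_(i, x) Xa (e x) (a_ i))
  (F1 := fun i y z => \sum_(phi | C1 phi && (pP phi == a_ i)) K phi * Xa (e y) (pQ phi) * Xa (e z) (pR phi))
  (g := \matrix_(i, x) Xa (e x) (a_ i))
  (G := fun i x z => \sum_(phi | C2 phi && (pQ phi == a_ i)) K phi * Xa (e x) (pP phi) * Xa (e z) (pR phi))
  (h := \matrix_(i, x) Xa (e x) (a_ i))
  (H := fun i x y => \sum_(phi | C3 phi && (pR phi == a_ i)) K phi * Xa (e x) (pP phi) * Xa (e y) (pQ phi))).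
move=> x y z.
have -> : ((x == y) && (y == z)) = (e x + e y + e z == 0).
  apply/idP/eqP => [/andP[/eqP-> /eqP->]|]; first exact: triple.
  by move/(HA _ _ _ (eA x) (eA y) (eA z)) => [/einj -> /einj ->]; rewrite !eqxx.
rewrite expand.
under eq_bigr do rewrite (XaE pp_lt) (XaE qq_lt) (XaE rr_lt).
rewrite (bigID C1) /= [X in _ + X = _](bigID (fun phi => Pn n (pQ phi))) /= addrA.
congr (_ + _ + _).
- transitivity (\sum_(phi | C1 phi) Xa (e x) (pP phi) * (K phi * Xa (e y) (pQ phi) * Xa (e z) (pR phi))).
    by apply: eq_bigr => phi _; rewrite /K /pP /pQ /pR; ring.
  rewrite (@group _ _ C1 pP (Pn n) (Xa (e x))) //; apply: eq_bigr => i _; by rewrite mxE.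
- transitivity (\sum_(phi | C2 phi) Xa (e y) (pQ phi) * (K phi * Xa (e x) (pP phi) * Xa (e z) (pR phi))).
    by apply: eq_bigr => phi _; rewrite /K /pP /pQ /pR; ring.
  rewrite (@group _ _ C2 pQ (Pn n) (Xa (e y))); last by move=> phi /andP[].
  apply: eq_bigr => i _; by rewrite mxE.
- transitivity (\sum_(phi | C3 phi) Xa (e z) (pR phi) * (K phi * Xa (e x) (pP phi) * Xa (e y) (pQ phi))).
    by apply: eq_bigr => phi _; rewrite /K /pP /pQ /pR; ring.
  rewrite (@group _ _ C3 pR (Pn n) (Xa (e z))); last first.
    move=> phi /andP[]; rewrite /Pn /pP /pQ /pR; have := wt_tot phi; lia.
  apply: eq_bigr => i _; by rewrite mxE.
Qed.

Module Cnt.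
Import all_order.
Import Order.TTheory Num.Theory.
Lemma count_bound (R' : realDomainType) n (u : R') : 0 <= u -> u <= 1 ->
  #|Pn n|%:R * u ^+ (2*n) <= (1 + u^+3 + u^+6) ^+ n.
Proof.
move=> u0 u1.
rewrite mulr_natl -sumr_const.
apply: le_trans (_ : \sum_(a in Pn n) (u^+3) ^+ wt a <= _).
  apply: ler_sum => a Pa; rewrite -exprM; exact: ler_wiXn2l.
apply: le_trans (_ : \sum_a (u^+3) ^+ wt a <= _).
  rewrite [X in _ <= X](bigID (mem (Pn n))) /= lerDl sumr_ge0 // => a _.
  by rewrite exprn_ge0 // exprn_ge0.
under eq_bigr => a _ do rewrite /wt -prodrXr.
rewrite [X in X <= _](_ : _ = \prod_(i < n) \sum_(j < 3) (u^+3)^+j); last by rewrite bigA_distr_bigA.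
have -> : \sum_(j < 3) (u^+3) ^+ j = 1 + u^+3 + u^+6.
  by rewrite !big_ord_recr big_ord0 /= add0r expr0 expr1 -exprM.
rewrite big_const_ord le_eqVlt; apply/orP; left; apply/eqP.
elim: (n) => [|k IH]; first by rewrite expr0.
by rewrite iterS IH -exprS.
Qed.

End Cnt.
End Comb.

Module Real.
Local Open Scope R_scope.
Lemma cube_root_pow x : 0 < x -> (Rpower x (1/3)) ^ 3 = x.
Proof.
intro hx. rewrite <- Rpower_pow by (unfold Rpower; apply exp_pos).
rewrite Rpower_mult. replace (1/3 * INR 3) with 1 by (simpl; field). apply Rpower_1; auto.
Qed.

Lemma cube_root_pos x : 0 < Rpower x (1/3).
Proof. unfold Rpower; apply exp_pos. Qed.

Lemma key_ineq : let s := sqrt 33 in let x0 := (s - 1)/8 in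
  let u := Rpower x0 (1/3) in
  0 < u /\ u <= 1 /\
  (1 + u^3 + u^6) / u^2 <= Rpower (5589 + 891 * s) (1/3) / 8.
Proof.
intros s x0 u.
assert (hs : s * s = 33) by (apply sqrt_sqrt; lra).
assert (hs0 : 0 <= s) by (apply sqrt_pos).
assert (hs5 : 5 < s) by nra.
assert (hs6 : s < 6) by nra.
assert (hx0 : 0 < x0) by (unfold x0; lra).
assert (hx1 : x0 < 1) by (unfold x0; lra).
assert (hu0 : 0 < u) by apply cube_root_pos.
assert (hu3 : u^3 = x0) by (apply cube_root_pow; auto).
assert (hu1 : u <= 1) by nra.
split; [auto|split; [auto|]].
set (K := 5589 + 891 * s).
assert (hK : 0 < K) by (unfold K; lra).
set (w := Rpower K (1/3)).
assert (hw0 : 0 < w) by apply cube_root_pos.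
assert (hw3 : w^3 = K) by (apply cube_root_pow; auto).
assert (hid : 512*(1+x0+x0^2)^3 - K*x0^2 = (s^2-33) *
  (-4257/512 - 2133/256 * s + 39/64 * s^2 + 9/256 * s^3 + 1/512 * s^4))
  by (unfold x0, K; field).
assert (hs2 : s^2 = 33) by (simpl; lra).
rewrite hs2 in hid. replace (33 - 33) with 0 in hid by ring.
rewrite Rmult_0_l in hid.
set (cp := (1 + u^3 + u^6) / u^2).
assert (hcp : cp * u^2 = 1 + x0 + x0^2).
  { unfold cp. rewrite <- hu3. field. lra. }
assert (hcp0 : 0 < cp) by (unfold cp; apply Rdiv_lt_0_compat; nra).
destruct (Rle_lt_dec cp (w/8)) as [h|h]; auto.
exfalso.
assert (h3 : (w/8)^3 < cp^3).
  { assert (ef : cp^3 - (w/8)^3 = (cp - w/8)*(cp^2 + cp*(w/8) + (w/8)^2)) by ring.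
    assert (0 < (cp - w/8)*(cp^2 + cp*(w/8) + (w/8)^2)).
    { apply Rmult_lt_0_compat; [lra|]. assert (0 < w/8) by lra. nra. }
    lra. }
assert (h6 : (w/8)^3 * x0^2 < cp^3 * x0^2) by (apply Rmult_lt_compat_r; nra).
assert (e1 : cp^3 * x0^2 = (1+x0+x0^2)^3).
  { rewrite <- hcp. rewrite <- hu3. ring. }
assert (e2 : (w/8)^3 * x0^2 = K * x0^2 / 512).
  { replace ((w/8)^3) with (w^3/512) by field. rewrite hw3. field. }
lra.
Qed.

Lemma key2 : exists u, 0 < u /\ u <= 1 /\ (1 + u^3 + u^6) / u^2 <= cconst.
Proof.
pose proof key_ineq as H. cbv zeta in H. eexists; unfold cconst; exact H.
Qed.
End Real.
Import Rstruct.

Lemma real_bound n : (INR #|Comb.Pn n| <= cconst ^ n)%R.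
Proof.
destruct Real.key2 as (u & hu0 & hu1 & hle).
assert (hc : (INR #|Comb.Pn n| * u ^ (2*n) <= (1 + u^3 + u^6) ^ n)%R).
{ apply/RleP. rewrite INRE !RpowE. apply: Comb.Cnt.count_bound; apply/RleP; [apply: Rlt_le; exact: hu0 | exact: hu1]. }
set (cp := ((1 + u^3 + u^6) / u^2)%R).
assert (hu2 : (0 < u^2)%R) by (apply pow_lt; lra).
assert (e : ((1+u^3+u^6)^n = cp^n * (u^2)^n)%R).
{ rewrite <- Rpow_mult_distr. f_equal. unfold cp. field. lra. }
rewrite pow_mult e in hc.
apply Rmult_le_reg_r with ((u^2)^n)%R; [apply pow_lt; auto|].
apply Rle_trans with (cp^n * (u^2)^n)%R; [exact hc|].
apply Rmult_le_compat_r; [left; apply pow_lt; auto|].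
apply pow_incr; split; [|exact hle].
unfold cp; left; apply Rdiv_lt_0_compat; [|exact hu2].
assert (0 < u^3)%R by (apply pow_lt; lra). assert (0 < u^6)%R by (apply pow_lt; lra). lra.
Qed.

Theorem mainTheorem8 :
  exists C : R, (0 < C)%R /\
    forall (n : nat), (1 <= n)%N ->
    forall A : {set 'rV['F_3]_n}, no_nontrivial_3sum A ->
      (INR #|A| <= C * cconst ^ n)%R.
Proof.
exists 3%R. split; [lra|]. intros n _ A HA.
have hA := Comb.capbound HA.
apply Rle_trans with (INR (3 * #|Comb.Pn n|)).
{ apply le_INR. apply/leP. exact hA. }
rewrite mult_INR. replace (INR 3) with 3%R by (simpl; ring). apply Rmult_le_compat_l; [lra|]. apply real_bound.
Qed.
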